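(* Let $\mathtt{InpEqSize}=\{(G,\mathbf{x}): \mathbf{x}(v)=|V(G)|\ \text{for every } v\in V(G)\}$, where $\mathbf{x}(v)$ is the binary encoding of an integer. Then $\mathtt{InpEqSize}\notin\mathrm{NLD}(t)$ for every time bound $t=o(n)$.
   Context: Configurations are pairs $(G,\mathbf{x})$ with $G$ a finite connected graph and $\mathbf{x}:V(G)\to\{0,1\}^*$. A distributed language is a decidable set of configurations. Model: synchronous LOCAL model. Nodes have distinct identities given by an injective $\mathrm{Id}:V(G)\to\mathbb{N}$ and unbounded messages. After $r$ rounds a node knows exactly its radius-$r$ ball (identities, inputs, certificates, adjacencies). A time bound $t$ is a function of $(G,\mathbf{x},\mathrm{Id})$, non-decreasing under taking connected induced subgraphs with restricted inputs and identities. $t=o(n)$ means $t(G,\mathbf{x},\mathrm{Id})\le g(|V(G)|)$ for some $g$ with $g(n)/n\to0$. A verification algorithm receives, besides $(G,\mathbf{x})$ and $\mathrm{Id}$, a certificate $\mathbf{y}(v)\in\{0,1\}^*$ at each node. It verifies $\mathcal{L}$ if: - for every $(G,\mathbf{x})\in\mathcal{L}$ there is a certificate $\mathbf{y}$ (depending only on $(G,\mathbf{x})$) such that for every identity assignment all nodes output ''yes''; - for every $(G,\mathbf{x})\notin\mathcal{L}$, for every certificate and every identity assignment, some node outputs ''no''. $\mathrm{NLD}(t)$ is the class of languages verifiable by a verification algorithm running in time $t$. *)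

(* Defs.v *)
From mathcomp Require Import all_boot.
Set Implicit Arguments.
Unset Strict Implicit.
Unset Printing Implicit Defensive.

Fixpoint binrev (fuel n : nat) : seq bool :=
  match fuel with
  | 0 => [::]
  | k.+1 => if n == 0 then [::] else odd n :: binrev k n./2
  end.
Definition bin (n : nat) : seq bool :=
  if n == 0 then [:: false] else rev (binrev n n).

Definition conn_graph (T : finType) (e : rel T) : Prop :=
  [/\ 0 < #|T|, symmetric e, irreflexive e & forall u v, connect e u v].

(* reach e r v u : u lies in the radius-r ball around v *)
Fixpoint reach (T : finType) (e : rel T) (r : nat) (v u : T) : bool :=
  match r with
  | 0 => u == v
  | r'.+1 => reach e r' v u || [exists w, reach e r' v w && e w u]
  end.

Definition input (T : Type) := T -> seq bool.   (* inputs x and certificates y *)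
Definition ident (T : Type) := T -> nat.

(* ---------- Views: after r rounds a node knows exactly its radius-r ball
   (identities, inputs, certificates, adjacencies).  Two nodes have the same
   radius-r view iff there is an identity-preserving isomorphism between their
   labelled radius-r balls (induced subgraphs) mapping centre to centre.  Since
   identities are injective this isomorphism is determined by the identities. *)
Definition same_view (r : nat)
    (T1 : finType) (e1 : rel T1) (x1 y1 : input T1) (Id1 : ident T1) (v1 : T1)
    (T2 : finType) (e2 : rel T2) (x2 y2 : input T2) (Id2 : ident T2) (v2 : T2) : Prop :=
  [/\ Id1 v1 = Id2 v2,
      (forall u1, reach e1 r v1 u1 -> exists2 u2, reach e2 r v2 u2 & Id2 u2 = Id1 u1),
      (forall u2, reach e2 r v2 u2 -> exists2 u1, reach e1 r v1 u1 & Id1 u1 = Id2 u2),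
      (forall u1 u2, reach e1 r v1 u1 -> reach e2 r v2 u2 -> Id1 u1 = Id2 u2 ->
          x1 u1 = x2 u2 /\ y1 u1 = y2 u2)
    & (forall u1 w1 u2 w2, reach e1 r v1 u1 -> reach e1 r v1 w1 ->
          reach e2 r v2 u2 -> reach e2 r v2 w2 ->
          Id1 u1 = Id2 u2 -> Id1 w1 = Id2 w2 -> e1 u1 w1 = e2 u2 w2)].

Definition language := forall (T : finType), rel T -> input T -> Prop.

Definition valgo :=
  forall (T : finType), rel T -> input T -> input T -> ident T -> T -> bool.

Definition tbound := forall (T : finType), rel T -> input T -> ident T -> nat.

Definition tb_monotone (t : tbound) : Prop :=
  forall (T : finType) (e : rel T) (x : input T) (Id : ident T)
         (S : finType) (h : S -> T),
    conn_graph e -> injective Id -> injective h ->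
    conn_graph (fun a b => e (h a) (h b)) ->
    t S (fun a b => e (h a) (h b)) (x \o h) (Id \o h) <= t T e x Id.

Definition tb_little_o (t : tbound) : Prop :=
  exists g : nat -> nat,
    (forall k, 0 < k -> exists N, forall n, N <= n -> k * g n <= n) /\
    (forall (T : finType) (e : rel T) (x : input T) (Id : ident T),
        conn_graph e -> injective Id -> t T e x Id <= g #|T|).

Definition runs_in (A : valgo) (t : tbound) : Prop :=
  forall (T1 : finType) (e1 : rel T1) (x1 y1 : input T1) (Id1 : ident T1) (v1 : T1)
         (T2 : finType) (e2 : rel T2) (x2 y2 : input T2) (Id2 : ident T2) (v2 : T2),
    conn_graph e1 -> injective Id1 -> conn_graph e2 -> injective Id2 ->
    same_view (t T1 e1 x1 Id1) e1 x1 y1 Id1 v1 e2 x2 y2 Id2 v2 ->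
    A T1 e1 x1 y1 Id1 v1 = A T2 e2 x2 y2 Id2 v2.

Definition verifies (A : valgo) (L : language) : Prop :=
  (forall (T : finType) (e : rel T) (x : input T),
      conn_graph e -> L T e x ->
      exists y : input T, forall Id : ident T, injective Id -> forall v, A T e x y Id v) /\
  (forall (T : finType) (e : rel T) (x : input T),
      conn_graph e -> ~ L T e x ->
      forall (y : input T) (Id : ident T), injective Id -> exists v, ~~ A T e x y Id v).

Definition NLD (t : tbound) (L : language) : Prop :=
  exists A : valgo, runs_in A t /\ verifies A L.

Definition InpEqSize : language :=
  fun T e x => forall v : T, x v = bin #|T|.

(* Main.v *)
Require Import Defs.
From mathcomp Require Import all_boot zify.
Set Implicit Arguments.
Unset Strict Implicit.
Unset Printing Implicit Defensive.

Definition cs (m : nat) (i : 'I_m.+1) : 'I_m.+1 := inord (i.+1 %% m.+1).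
Definition fe (T : finType) (f : T -> T) : rel T := fun a b => (b == f a) || (a == f b).

Lemma cs_val m (i : 'I_m.+1) : nat_of_ord (cs i) = i.+1 %% m.+1.
Proof. by rewrite /cs inordK // ltn_pmod. Qed.

Lemma iter_cs_val m k (i : 'I_m.+1) : nat_of_ord (iter k (@cs m) i) = (i + k) %% m.+1.
Proof.
elim: k => [|k IH] /=; first by rewrite addn0 modn_small.
by rewrite cs_val IH addnS -addn1 modnDml addn1.
Qed.

Lemma iter_cs_period m (x : 'I_m.+1) : iter m.+1 (@cs m) x = x.
Proof. by apply: ord_inj; rewrite iter_cs_val modnDr modn_small. Qed.

Lemma iter_cs_fix m d (x : 'I_m.+1) : d < m.+1 -> iter d (@cs m) x = x -> d = 0.
Proof.
move=> hd /(congr1 (@nat_of_ord _)); rewrite iter_cs_val => H.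
have : (x + d == x + 0 %[mod m.+1]) by rewrite addn0 H modn_small.
by rewrite eqn_modDl mod0n modn_small // => /eqP.
Qed.

Lemma cs_inj m : injective (@cs m).
Proof.
move=> a b /(congr1 (@nat_of_ord _)); rewrite !cs_val => H; apply: val_inj.
have : (a + 1 == b + 1 %[mod m.+1]) by rewrite !addn1 H.
by rewrite eqn_modDr !modn_small // => /eqP.
Qed.

Lemma iter_inj (T : Type) (f : T -> T) k : injective f -> injective (iter k f).
Proof. move=> fi; elim: k => [|k IH] //= a b /fi; exact: IH. Qed.

Lemma reach_iter (T : finType) (f : T -> T) k v : reach (fe f) k v (iter k f v).
Proof.
elim: k => [|k IH] /=; first by rewrite eqxx.
apply/orP; right; apply/existsP; exists (iter k f v); by rewrite IH /fe eqxx.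
Qed.

Lemma reach_iter' (T : finType) (f : T -> T) k u : reach (fe f) k (iter k f u) u.
Proof.
elim: k u => [|k IH] u; first by rewrite /= eqxx.
rewrite iterSr /=.
apply/orP; right; apply/existsP; exists (f u).
by rewrite IH /fe eqxx orbT.
Qed.

Lemma reach_mono (T : finType) (e : rel T) r s v u :
  r <= s -> reach e r v u -> reach e s v u.
Proof.
elim: s => [|s IH]; first by rewrite leqn0 => /eqP ->.
rewrite leq_eqVlt => /orP [/eqP -> //|]; rewrite ltnS => H R /=.
by rewrite IH.
Qed.

Lemma reach_char (T : finType) (f : T -> T) (finj : injective f) r v u :
  reach (fe f) r v u ->
  exists2 k, k <= r & (u = iter k f v \/ v = iter k f u).
Proof.
elim: r u => [|r IH] u /=.
  by move/eqP ->; exists 0 => //; left.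
case/orP => [/IH [k kr H]| /existsP [w /andP [/IH [k kr H] ewu]]].
  by exists k => //; apply: leqW.
case/orP: ewu => /eqP E.
- case: H => H.
  + by exists k.+1 => //; left; rewrite E H.
  + case: k kr H => [|k] kr H.
      by exists 1 => //; left; rewrite E H.
    by exists k; [lia | right; rewrite H iterSr -E].
- case: H => H.
  + case: k kr H => [|k] kr H.
      by exists 1 => //; right; rewrite /= -E H.
    exists k; first lia.
    by left; apply: finj; rewrite -E H.
  + by exists k.+1 => //; right; rewrite H E iterSr.
Qed.

Lemma connect_iter (T : finType) (f : T -> T) k u : connect (fe f) u (iter k f u).
Proof.
elim: k => [|k IH]; first exact: connect0.
apply: connect_trans IH _; apply: connect1; by rewrite /fe eqxx.
Qed.

Lemma cycle_conn m : 0 < m -> conn_graph (fe (@cs m)).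
Proof.
move=> m0; split.
- by rewrite card_ord.
- by move=> a b; rewrite /fe orbC.
- move=> a; rewrite /fe orbb; apply/negbTE/eqP => H.
  by have := @iter_cs_fix m 1 a; rewrite ltnS m0 => /(_ isT (esym H)).
- move=> u v.
  have -> : v = iter (v + m.+1 - u) (@cs m) u.
    apply: ord_inj; rewrite iter_cs_val.
    have -> : u + (v + m.+1 - u) = v + m.+1 by have := ltn_ord u; lia.
    by rewrite modnDr modn_small.
  exact: connect_iter.
Qed.

Definition pr (N M : nat) (i : 'I_M.+1) : 'I_N.+1 := inord (i %% N.+1).

Lemma pr_val N M (i : 'I_M.+1) : nat_of_ord (@pr N M i) = i %% N.+1.
Proof. by rewrite /pr inordK // ltn_pmod. Qed.

Lemma pr_cs N M (hM : M.+1 = N.+1 * 2) (i : 'I_M.+1) :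
  pr N (cs i) = cs (pr N i).
Proof.
have hd : N.+1 %| M.+1 by rewrite hM dvdn_mulr.
apply: ord_inj; rewrite pr_val !cs_val pr_val modn_dvdm //.
by rewrite -[(i %% N.+1).+1]addn1 modnDml addn1.
Qed.

Lemma pr_iter N M (hM : M.+1 = N.+1 * 2) k (x : 'I_M.+1) :
  pr N (iter k (@cs M) x) = iter k (@cs N) (pr N x).
Proof. elim: k => [|k IH] //=; by rewrite pr_cs // IH. Qed.

Lemma step_eq N M (hM : M.+1 = N.+1 * 2) d (x y : 'I_M.+1) :
  pr N y = pr N x -> y = iter d (@cs M) x -> d < N.+1 -> y = x.
Proof.
move=> hp hy hd; have := hp; rewrite hy pr_iter // => /(iter_cs_fix hd) d0.
by rewrite d0.
Qed.

Lemma ball_inj N M (hM : M.+1 = N.+1 * 2) s (v u w : 'I_M.+1) :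
  s.*2 < N.+1 -> reach (fe (@cs M)) s v u -> reach (fe (@cs M)) s v w ->
  pr N u = pr N w -> u = w.
Proof.
move=> hs /(reach_char (@cs_inj M)) [k ks Hu] /(reach_char (@cs_inj M)) [k' ks' Hw] hp.
case: Hu => Hu; case: Hw => Hw.
- case: (leqP k k') => hk.
  + symmetry; apply: (step_eq hM (d := k' - k)) => //; last by lia.
    by rewrite Hw Hu -iterD subnK.
  + apply: (step_eq hM (d := k - k')) => //; last by lia.
    by rewrite Hw Hu -iterD subnK // ltnW.
- apply: (step_eq hM (d := k + k')) => //; last by lia.
  by rewrite Hu Hw -iterD.
- symmetry; apply: (step_eq hM (d := k' + k)) => //; last by lia.
  by rewrite Hw Hu -iterD.
- case: (leqP k k') => hk.
  + apply: (step_eq hM (d := k' - k)) => //; last by lia.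
    apply: (@iter_inj _ _ k (@cs_inj M)).
    by rewrite -Hu Hw -iterD subnKC.
  + symmetry; apply: (step_eq hM (d := k - k')) => //; last by lia.
    apply: (@iter_inj _ _ k' (@cs_inj M)).
    by rewrite -Hw Hu -iterD subnKC // ltnW.
Qed.

Lemma reach_pr N M (hM : M.+1 = N.+1 * 2) r (v u : 'I_M.+1) :
  reach (fe (@cs M)) r v u -> reach (fe (@cs N)) r (pr N v) (pr N u).
Proof.
move=> /(reach_char (@cs_inj M)) [k kr [->|->]]; rewrite pr_iter //;
apply: (reach_mono kr); [exact: reach_iter | exact: reach_iter'].
Qed.

Lemma reach_surj N M (hM : M.+1 = N.+1 * 2) r (v : 'I_M.+1) (u1 : 'I_N.+1) :
  r < M.+1 -> reach (fe (@cs N)) r (pr N v) u1 ->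
  exists2 u2, reach (fe (@cs M)) r v u2 & pr N u2 = u1.
Proof.
move=> hr /(reach_char (@cs_inj N)) [k kr [Hu|Hv]].
  exists (iter k (@cs M) v); last by rewrite pr_iter.
  by apply: (reach_mono kr); apply: reach_iter.
have Hk : iter k (@cs M) (iter (M.+1 - k) (@cs M) v) = v.
  by rewrite -iterD subnKC ?iter_cs_period //; lia.
exists (iter (M.+1 - k) (@cs M) v).
  by rewrite -{1}Hk; apply: (reach_mono kr); apply: reach_iter'.
apply: (@iter_inj _ _ k (@cs_inj N)).
by rewrite -pr_iter // Hk.
Qed.

Lemma bin_last n : 0 < n -> last false (bin n) = odd n.
Proof.
case: n => [|n] // _.
by rewrite /bin /= rev_cons last_rcons.
Qed.

Theorem theorem3 (t : tbound) :
  tb_monotone t -> tb_little_o t -> ~ NLD t InpEqSize.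
Proof.
move=> _ [g [hg htb]] [A [hrun [hyes hno]]].
have [N0 hN0] := hg 4 isT.
set N := (maxn N0 5).*2.
set M := N.*2.+1.
have hM : M.+1 = N.+1 * 2 by rewrite /M; lia.
have N1 : 10 <= N by rewrite /N; lia.
pose x1 := fun _ : 'I_N.+1 => bin N.+1.
have c1 : conn_graph (fe (@cs N)) by apply: cycle_conn; lia.
have [y hy] : exists y : input 'I_N.+1, forall Id : ident 'I_N.+1, injective Id -> forall v, A _ (fe (@cs N)) x1 y Id v.
  by apply: hyes c1 _ => v; rewrite card_ord.
pose x2 := fun _ : 'I_M.+1 => bin N.+1.
pose y2 := fun u : 'I_M.+1 => y (pr N u).
have c2 : conn_graph (fe (@cs M)) by apply: cycle_conn; lia.
have nL : ~ InpEqSize (fe (@cs M)) x2.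
  move=> H; have := H ord0; rewrite card_ord /x2 => /(congr1 (last false)).
  rewrite !bin_last // hM oddM andbF /= /N odd_double //.
have [v2 hv2] := hno _ _ x2 c2 nL y2 (@nat_of_ord _) (@ord_inj _).
set R := g N.+1.
have hR : 4 * R <= N.+1 by apply: hN0; rewrite /N; lia.
pose L (j : 'I_N.+1) : 'I_M.+1 :=
  odflt (inord j) [pick u | reach (fe (@cs M)) R v2 u && (pr N u == j)].
pose Id1 := fun j => nat_of_ord (L j).
have prL : forall j, pr N (L j) = j.
  move=> j; rewrite /L; case: pickP => [u /andP [_ /eqP] //|_] /=.
  apply: ord_inj; rewrite pr_val inordK ?modn_small //; have := ltn_ord j; lia.
have Id1inj : injective Id1.
  by move=> a b /ord_inj H; rewrite -(prL a) -(prL b) H.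
have LB : forall u2, reach (fe (@cs M)) R v2 u2 -> L (pr N u2) = u2.
  move=> u2 hu2; rewrite /L; case: pickP => [u /andP [hu /eqP hpu] | H] /=.
    apply: (@ball_inj N M hM R.+1 v2); first by lia.
    - by apply: (reach_mono (leqnSn R)).
    - by apply: (reach_mono (leqnSn R)).
    - done.
  by have := H u2; rewrite hu2 eqxx.
have hA1 := hy Id1 Id1inj (pr N v2).
move/negP: hv2; apply.
rewrite -(hrun _ _ x1 y Id1 (pr N v2) _ _ x2 y2 (@nat_of_ord _) v2 c1 Id1inj c2 (@ord_inj _)) //.
have hr : t _ (fe (@cs N)) x1 Id1 <= R.
  by have := htb _ _ x1 Id1 c1 Id1inj; rewrite card_ord.
set r := t _ (fe (@cs N)) x1 Id1 in hr *.
have v2R : reach (fe (@cs M)) R v2 v2 by apply: (reach_mono (leq0n R)); rewrite /= eqxx.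
have idpr : forall u1 (u2 : 'I_M.+1), Id1 u1 = u2 -> pr N u2 = u1.
  by move=> u1 u2 /ord_inj <-.
split.
- by rewrite /Id1 LB.
- move=> u1 hu1; have [u2 hu2 hpu] := reach_surj hM (ltac:(lia) : r < M.+1) hu1.
  exists u2 => //; rewrite /Id1 -hpu LB //; exact: (reach_mono hr).
- move=> u2 hu2; exists (pr N u2); first exact: reach_pr.
  rewrite /Id1 LB //; exact: (reach_mono hr).
- move=> u1 u2 _ _ /idpr <-; split => //.
- move=> u1 w1 u2 w2 _ _ hu2 hw2 /idpr hu /idpr hw.
  subst u1 w1.
  have hu2R := reach_mono hr hu2; have hw2R := reach_mono hr hw2.
  have hcsu : reach (fe (@cs M)) R.+1 v2 (cs u2).
    rewrite /=; apply/orP; right; apply/existsP; exists u2; by rewrite hu2R /fe eqxx.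
  have hcsw : reach (fe (@cs M)) R.+1 v2 (cs w2).
    rewrite /=; apply/orP; right; apply/existsP; exists w2; by rewrite hw2R /fe eqxx.
  have hinj := @ball_inj N M hM R.+1 v2; have hs : R.+1.*2 < N.+1 by lia.
  rewrite /fe; apply/idP/idP.
  + case/orP => /eqP H; apply/orP; [left|right]; apply/eqP.
    * apply: (hinj _ _ hs) => //; first exact: (reach_mono (leqnSn R)).
      by rewrite pr_cs.
    * apply: (hinj _ _ hs) => //; first exact: (reach_mono (leqnSn R)).
      by rewrite pr_cs.
  + by case/orP => /eqP ->; rewrite pr_cs // eqxx ?orbT.
Qed.
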